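(* Let $G=(V,E^+\cup E^-)$ be a signed graph and let $D$ be an almost valid drawing of $G$ in the circumference $\mathcal{C}$. Then $G$ has a valid drawing in $\mathcal{C}$.
   Context: A signed graph $G=(V,E^+\cup E^-)$ is a finite, undirected, connected, loopless graph without parallel edges whose edge set is partitioned into positive edges $E^+$ and negative edges $E^-$ (with $E^+\cap E^-=\emptyset$). For $i\in V$, $N^+(i)=\{j: ij\in E^+\}$ and $N^-(i)=\{j: ij\in E^-\}$. The circumference is $\mathcal{C}=\{(x,y)\in\mathbb{R}^2:\sqrt{x^2+y^2}=1\}$; each point is identified with an angle in $[0,2\pi)$, and the distance between points $p,q$ is the measure of the smaller angle they form with the origin, i.e. for $q\le p$, $d(p,q)=\min\{(p-q)\bmod 2\pi,(2\pi-p+q)\bmod 2\pi\}$. A drawing of $G$ in $\mathcal{C}$ is an injection $D:V\to\mathcal{C}$. A drawing is valid if for all $i\in V$, all $j\in N^+(i)$ and all $k\in N^-(i)$, $d(D(i),D(j))<d(D(i),D(k))$. A drawing is almost valid if there exists $\delta>0$ such that for all $i\in V$, all $j\in N^+(i)$ and all $k\in N^-(i)$, $d(D(i),D(j))\le\delta\le d(D(i),D(k))$. *)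

(* Defs.v *)
From mathcomp Require Import all_boot.
From Stdlib Require Import Reals.
Open Scope R_scope.

Record signed_graph (V : finType) (pos neg : rel V) : Prop := {
  sg_pos_sym : forall i j, pos i j = pos j i;
  sg_neg_sym : forall i j, neg i j = neg j i;
  sg_pos_irr : forall i, pos i i = false;
  sg_neg_irr : forall i, neg i i = false;
  sg_disj : forall i j, ~~ (pos i j && neg i j);
  sg_conn : forall i j, connect (fun x y => pos x y || neg x y) i j
}.

(* A point of the circumference, identified with an angle in [0, 2*PI). *)
Definition on_circ (p : R) : Prop := 0 <= p < 2 * PI.

(* Angular distance: the measure of the smaller angle; for p, q in [0,2PI)
   this equals min{(p-q) mod 2PI, (2PI-p+q) mod 2PI} (q <= p). *)
Definition cdist (p q : R) : R := Rmin (Rabs (p - q)) (2 * PI - Rabs (p - q)).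

Definition drawing (V : finType) (D : V -> R) : Prop :=
  (forall i, on_circ (D i)) /\ (forall i j, D i = D j -> i = j).

Definition valid_drawing (V : finType) (pos neg : rel V) (D : V -> R) : Prop :=
  drawing V D /\
  forall i j k, pos i j -> neg i k -> cdist (D i) (D j) < cdist (D i) (D k).

Definition almost_valid_drawing (V : finType) (pos neg : rel V) (D : V -> R)
  : Prop :=
  drawing V D /\
  exists delta, delta > 0 /\
    forall i j k, pos i j -> neg i k ->
      cdist (D i) (D j) <= delta /\ delta <= cdist (D i) (D k).

(* Main.v *)
Require Import Defs.
From mathcomp Require Import all_boot.
From Stdlib Require Import Reals Lra Lia ZArith ClassicalEpsilon.
Open Scope R_scope.

Definition cong (x y : R) := exists m : Z, x - y = 2 * PI * IZR m.

Lemma cong_refl x : cong x x.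
Proof. exists 0%Z; simpl; ring. Qed.
Lemma cong_sym x y : cong x y -> cong y x.
Proof. intros [m H]; exists (- m)%Z; rewrite opp_IZR; lra. Qed.
Lemma cong_trans x y z : cong x y -> cong y z -> cong x z.
Proof. intros [m H] [n H']; exists (m+n)%Z; rewrite plus_IZR; lra. Qed.

Lemma cong_min b c : Rabs b <= PI -> cong c b -> Rabs b <= Rabs c.
Proof.
  intros Hb [m Hm]. pose proof PI_RGT_0.
  destruct (Z.lt_trichotomy m 0) as [Hlt|[Heq|Hgt]].
  - assert (IZR m <= -1) by (apply IZR_le; lia).
    assert (c <= b - 2*PI) by nra. split_Rabs; lra.
  - subst; simpl in Hm. assert (c = b) by lra. subst; lra.
  - assert (1 <= IZR m) by (apply IZR_le; lia). assert (c >= b + 2*PI) by nra.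
    split_Rabs; lra.
Qed.

Lemma cdist_rep p q : on_circ p -> on_circ q ->
  exists a, Rabs a <= PI /\ cong (q - p) a /\ cdist p q = Rabs a.
Proof.
  unfold on_circ, cdist; intros Hp Hq. pose proof PI_RGT_0.
  destruct (Rlt_dec PI (q - p)).
  { exists (q - p - 2*PI). split; [split_Rabs; lra|split].
    - exists 1%Z; simpl; lra.
    - unfold Rmin; destruct Rle_dec; split_Rabs; lra. }
  destruct (Rlt_dec (q - p) (-PI)).
  { exists (q - p + 2*PI). split; [split_Rabs; lra|split].
    - exists (-1)%Z; simpl; lra.
    - unfold Rmin; destruct Rle_dec; split_Rabs; lra. }
  exists (q - p). split; [split_Rabs; lra|split].
  - apply cong_refl.
  - unfold Rmin; destruct Rle_dec; split_Rabs; lra.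
Qed.

Lemma cdist_of_cong p q a : on_circ p -> on_circ q -> Rabs a <= PI ->
  cong (q-p) a -> cdist p q = Rabs a.
Proof.
  intros Hp Hq Ha Hc. destruct (cdist_rep p q Hp Hq) as [a0 [Ha0 [Hc0 ->]]].
  assert (H : cong a a0) by (eapply cong_trans; [apply cong_sym; exact Hc| exact Hc0]).
  pose proof (cong_min a0 a Ha0 H). pose proof (cong_min a a0 Ha (cong_sym _ _ H)). lra.
Qed.

Lemma cong_circ_eq p q : on_circ p -> on_circ q -> cong p q -> p = q.
Proof.
  unfold on_circ; intros Hp Hq [m Hm]. pose proof PI_RGT_0.
  assert (H1 : -1 < IZR m) by nra. assert (H2 : IZR m < 1) by nra.
  apply lt_IZR in H1; apply lt_IZR in H2.
  assert (m = 0%Z) by lia. subst; simpl in Hm; lra.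
Qed.

Lemma cdist_lip p q p' q' c : on_circ p -> on_circ q -> on_circ p' -> on_circ q' ->
  cong (q' - p') ((q - p) + c) -> Rabs (cdist p' q' - cdist p q) <= Rabs c.
Proof.
  intros Hp Hq Hp' Hq' Hc.
  destruct (cdist_rep p q Hp Hq) as [a [Ha [Hca ->]]].
  destruct (cdist_rep p' q' Hp' Hq') as [b [Hb [Hcb ->]]].
  destruct Hc as [m1 H1]; destruct Hca as [m2 H2]; destruct Hcb as [m3 H3].
  assert (Hx : cong (a + c) b).
  { exists (m3 - m1 - m2)%Z. rewrite !minus_IZR. lra. }
  assert (Hy : cong (b - c) a).
  { exists (m1 + m2 - m3)%Z. rewrite minus_IZR plus_IZR. lra. }
  pose proof (cong_min b (a+c) Hb Hx). pose proof (cong_min a (b-c) Ha Hy).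
  split_Rabs; lra.
Qed.

Definition wrap (x : R) : R :=
  if Rlt_dec x 0 then x + 2*PI else if Rle_dec (2*PI) x then x - 2*PI else x.

Lemma wrap_spec x : -2*PI <= x < 4*PI -> on_circ (wrap x) /\ cong (wrap x) x.
Proof.
  intros H. unfold wrap, on_circ. destruct Rlt_dec; [|destruct Rle_dec]; simpl; split; try lra.
  - exists 1%Z; simpl; lra.
  - exists (-1)%Z; simpl; lra.
  - apply cong_refl.
Qed.

Lemma seq_min (T : eqType) (s : seq T) (f : T -> R) :
  exists m, 0 < m /\ forall x, x \in s -> 0 < f x -> m <= f x.
Proof.
  elim: s => [|a s [m [Hm H]]].
  - exists 1; split; [lra| by []].
  - destruct (Rlt_dec 0 (f a)).
    + exists (Rmin m (f a)); split. apply Rmin_glb_lt; lra.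
      move=> x; rewrite in_cons => /orP [/eqP -> _ | Hx Hf]. apply Rmin_r.
      eapply Rle_trans. apply Rmin_l. by apply H.
    + exists m; split=>//. move=> x; rewrite in_cons => /orP [/eqP -> Hf | Hx Hf]; [lra| by apply H].
Qed.

Lemma mem_all (V : finType) (x : (V * V)%type) : x \in enum {: (V * V)%type}.
Proof. by rewrite mem_enum. Qed.

Theorem lemma2 (V : finType) (pos neg : rel V) (D : V -> R) :
  signed_graph V pos neg ->
  almost_valid_drawing V pos neg D ->
  exists D' : V -> R, valid_drawing V pos neg D'.
Proof.
  intros Hsg [[Hcirc Hinj] [delta [Hdpos Hd]]].
  destruct Hsg as [Hps Hns Hpi Hni Hdisj Hconn].
  pose proof PI_RGT_0 as HPI.
  assert (Hle_pi : forall p q, cdist p q <= PI).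
  { intros; unfold cdist, Rmin; destruct Rle_dec; lra. }
  assert (Hopp : forall i j k a b, pos i j -> neg i k -> cong (D j - D i) a ->
            cong (D k - D i) b -> a = b -> False).
  { intros i j k a b Hij Hik [m Hm] [n Hn] Hab.
    assert (Hjk : D j = D k).
    { apply cong_circ_eq; auto. exists (m - n)%Z. rewrite minus_IZR. lra. }
    apply Hinj in Hjk; subst. have := Hdisj i k. by rewrite Hij Hik. }
  destruct (Rlt_dec delta PI) as [Hdlt | Hdge].
  2: { exists D. split; [split; auto|]. intros i j k Hij Hik.
       destruct (Hd i j k Hij Hik) as [H1 H2].
       pose proof (Hle_pi (D i) (D k)). pose proof (Hle_pi (D i) (D j)).
       destruct (Rlt_dec (cdist (D i) (D j)) (cdist (D i) (D k))) as [|Hn]; [assumption|exfalso].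
       destruct (cdist_rep (D i) (D j)) as [a [Ha [Hca Hda]]]; auto.
       destruct (cdist_rep (D i) (D k)) as [b [Hb [Hcb Hdb]]]; auto.
       assert (Hb' : cong (D k - D i) a).
       { eapply cong_trans; [exact Hcb|].
         assert (Ea : a = PI \/ a = - PI) by (split_Rabs; lra).
         assert (Eb : b = PI \/ b = - PI) by (split_Rabs; lra).
         destruct Ea as [-> | ->]; destruct Eb as [-> | ->];
           [exists 0%Z | exists (-1)%Z | exists 1%Z | exists 0%Z]; simpl; lra. }
       exact (Hopp i j k a a Hij Hik Hca Hb' erefl). }
  destruct (@seq_min _ (enum {: (V * V)%type}) (fun x => cdist (D x.1) (D x.2))) as [m1 [Hm1 Hf1]].
  destruct (@seq_min _ (enum {: (V * V)%type}) (fun x => Rabs (cdist (D x.1) (D x.2) - delta))) as [m2 [Hm2 Hf2]].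
  set eps := Rmin (Rmin m1 m2) (Rmin delta (PI - delta)) / 8.
  assert (He1 : 8 * eps <= m1).
  { unfold eps. pose proof (Rmin_l m1 m2). pose proof (Rmin_l (Rmin m1 m2) (Rmin delta (PI - delta))). lra. }
  assert (He2 : 8 * eps <= m2).
  { unfold eps. pose proof (Rmin_r m1 m2). pose proof (Rmin_l (Rmin m1 m2) (Rmin delta (PI - delta))). lra. }
  assert (He3 : 8 * eps <= delta).
  { unfold eps. pose proof (Rmin_l delta (PI - delta)). pose proof (Rmin_r (Rmin m1 m2) (Rmin delta (PI - delta))). lra. }
  assert (He4 : 8 * eps <= PI - delta).
  { unfold eps. pose proof (Rmin_r delta (PI - delta)). pose proof (Rmin_r (Rmin m1 m2) (Rmin delta (PI - delta))). lra. }
  assert (Hepos : 0 < eps).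
  { unfold eps. assert (0 < Rmin (Rmin m1 m2) (Rmin delta (PI - delta))) by (repeat apply Rmin_glb_lt; lra). lra. }
  clearbody eps.
  pose Crit := fun i => exists j k, pos i j /\ neg i k /\ cdist (D i) (D j) = delta /\ cdist (D i) (D k) = delta.
  pose Qd := fun i => exists j, pos i j /\ cong (D j - D i) delta.
  pose e := fun i => if excluded_middle_informative (Crit i) then
                       (if excluded_middle_informative (Qd i) then eps else - eps) else 0.
  pose D' := fun i => wrap (D i + e i).
  assert (He : forall i, e i = eps \/ e i = -eps \/ e i = 0).
  { intros i; unfold e. destruct excluded_middle_informative; [destruct excluded_middle_informative|]; simpl; auto. }
  assert (HeC : forall i, ~ Crit i -> e i = 0).
  { intros i Hn; unfold e. destruct excluded_middle_informative; [contradiction|reflexivity]. }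
  assert (HD' : forall i, on_circ (D' i) /\ cong (D' i) (D i + e i)).
  { intros i; apply wrap_spec. destruct (Hcirc i). destruct (He i) as [E|[E|E]]; rewrite E; lra. }
  assert (Hshift : forall p q, cong (D' q - D' p) ((D q - D p) + (e q - e p))).
  { intros p q. destruct (proj2 (HD' p)) as [m Hm]. destruct (proj2 (HD' q)) as [n Hn].
    exists (n - m)%Z. rewrite minus_IZR. lra. }
  assert (Hlip : forall p q, Rabs (cdist (D' p) (D' q) - cdist (D p) (D q)) <= 2 * eps).
  { intros p q. eapply Rle_trans; [apply (cdist_lip (D p) (D q) (D' p) (D' q) (e q - e p)); [auto|auto|apply HD'|apply HD'|apply Hshift]|].
    destruct (He p) as [E|[E|E]]; destruct (He q) as [F|[F|F]]; rewrite E F; split_Rabs; lra. }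
  assert (Htight : forall p q, cdist (D p) (D q) = delta ->
            exists s, (s = 1 \/ s = -1) /\ cong (D q - D p) (s * delta)).
  { intros p q Hpq. destruct (cdist_rep (D p) (D q)) as [a [Ha [Hca Hda]]]; auto.
    assert (Ea : a = delta \/ a = - delta) by (split_Rabs; lra).
    destruct Ea as [E|E]; [exists 1 | exists (-1)]; split; auto; rewrite E in Hca;
      (replace (1 * delta) with delta by ring) || (replace (-1 * delta) with (- delta) by ring); auto. }
  assert (HDir : forall i j s, (s = 1 \/ s = -1) -> Crit i -> pos i j ->
            cong (D j - D i) (s * delta) -> e i = s * eps).
  { intros i j s Hs HC Hij Hc. unfold e.
    destruct (excluded_middle_informative (Crit i)) as [HC0|HnC]; [|contradiction]; simpl.
    destruct (excluded_middle_informative (Qd i)) as [[j' [Hij' Hc']]|HnQ]; simpl.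
    - destruct Hs as [-> | ->]; [ring|exfalso].
      destruct HC as [j0 [k0 [Hj0 [Hk0 [Ej0 Ek0]]]]].
      destruct (Htight i k0 Ek0) as [t [Ht Hct]].
      destruct Ht as [-> | ->].
      + apply (Hopp i j' k0 delta (1*delta)); auto; ring.
      + apply (Hopp i j k0 (-1*delta) (-1*delta)); auto.
    - destruct Hs as [-> | ->]; [exfalso|ring]. apply HnQ. exists j; split; auto.
      replace delta with (1 * delta) by ring; auto. }
  assert (HDirK : forall i k s, (s = 1 \/ s = -1) -> Crit k -> neg i k ->
            cong (D i - D k) (s * delta) -> e k = - s * eps).
  { intros i k s Hs HC Hik Hc.
    pose proof HC as HC'.
    destruct HC' as [j1 [k1 [Hj1 [Hk1 [Ej1 Ek1]]]]].
    destruct (Htight k j1 Ej1) as [t [Ht Hct]].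
    assert (Hki : neg k i) by (rewrite Hns; auto).
    assert (t = - s).
    { destruct Hs as [-> | ->]; destruct Ht as [-> | ->]; try ring; exfalso;
        eapply (Hopp k j1 i); eauto. }
    subst t. apply (HDir k j1 (- s)); auto; destruct Hs as [-> | ->]; lra. }
  exists D'. split; [split|].
  - intros i; apply HD'.
  - intros i j Hij.
    destruct (cdist_rep (D i) (D j)) as [a [Ha [Hca Hda]]]; auto.
    assert (H0 : cdist (D' i) (D' j) = 0).
    { rewrite Hij. unfold cdist. rewrite Rminus_diag Rabs_R0. unfold Rmin; destruct Rle_dec; lra. }
    pose proof (Hlip i j) as Hl. rewrite H0 in Hl.
    destruct (Rle_lt_or_eq_dec 0 (cdist (D i) (D j))) as [Hlt|Heq].
    + rewrite Hda; apply Rabs_pos.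
    + exfalso. pose proof (Hf1 (i, j) (mem_all _ _) Hlt). simpl in *. split_Rabs; lra.
    + apply Hinj, cong_circ_eq; auto. rewrite Hda in Heq.
      assert (a = 0) by (split_Rabs; lra). subst a.
      destruct Hca as [m Hm]. exists (- m)%Z. rewrite opp_IZR. lra.
  - intros i j k Hij Hik.
    destruct (Hd i j k Hij Hik) as [H1 H2].
    pose proof (Hlip i j) as Lj. pose proof (Hlip i k) as Lk.
    destruct (Req_dec (cdist (D i) (D j)) delta) as [Ej|Nj].
    2: { pose proof (Hf2 (i, j) (mem_all _ _)) as F. simpl in F.
         assert (0 < Rabs (cdist (D i) (D j) - delta)) by (split_Rabs; lra).
         specialize (F H). split_Rabs; lra. }
    destruct (Req_dec (cdist (D i) (D k)) delta) as [Ek|Nk].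
    2: { pose proof (Hf2 (i, k) (mem_all _ _)) as F. simpl in F.
         assert (0 < Rabs (cdist (D i) (D k) - delta)) by (split_Rabs; lra).
         specialize (F H). split_Rabs; lra. }
    assert (HC : Crit i) by (exists j, k; auto).
    destruct (Htight i j Ej) as [s [Hs Hcj]].
    destruct (Htight i k Ek) as [t [Ht Hck]].
    assert (t = - s).
    { destruct Hs as [-> | ->]; destruct Ht as [-> | ->]; try ring; exfalso;
        eapply (Hopp i j k); eauto. }
    subst t.
    assert (Ei : e i = s * eps) by (eapply HDir; eauto).
    assert (Ejj : e j = 0 \/ e j = - s * eps).
    { destruct (classic (Crit j)) as [HCj|HCj]; [right|left; auto].
      assert (Hs' : - s = 1 \/ - s = -1) by (destruct Hs as [-> | ->]; lra).
      assert (Hji : pos j i) by (rewrite Hps; auto).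
      assert (Hc' : cong (D i - D j) (- s * delta)).
      { destruct Hcj as [m Hm]. exists (- m)%Z. rewrite opp_IZR. lra. }
      exact (HDir j i (- s) Hs' HCj Hji Hc'). }
    assert (Ekk : e k = 0 \/ e k = - s * eps).
    { destruct (classic (Crit k)) as [HCk|HCk]; [right|left; auto].
      assert (Hc' : cong (D i - D k) (s * delta)).
      { destruct Hck as [m Hm]. exists (- m)%Z. rewrite opp_IZR. lra. }
      exact (HDirK i k s Hs HCk Hik Hc'). }
    assert (Cj : cong (D' j - D' i) (s * delta + (e j - e i))).
    { destruct (Hshift i j) as [m Hm]; destruct Hcj as [n Hn]. exists (m + n)%Z. rewrite plus_IZR. lra. }
    assert (Ck : cong (D' k - D' i) (- s * delta + (e k - e i))).
    { destruct (Hshift i k) as [m Hm]; destruct Hck as [n Hn]. exists (m + n)%Z. rewrite plus_IZR. lra. }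
    destruct (HD' i) as [Oi _]. destruct (HD' j) as [Oj _]. destruct (HD' k) as [Ok _].
    rewrite Ei in Cj Ck.
    destruct Hs as [-> | ->]; destruct Ejj as [Fj|Fj]; destruct Ekk as [Fk|Fk];
      rewrite Fj in Cj; rewrite Fk in Ck;
      (rewrite (cdist_of_cong _ _ _ Oi Oj _ Cj); [|split_Rabs; lra]);
      (rewrite (cdist_of_cong _ _ _ Oi Ok _ Ck); [|split_Rabs; lra]);
      split_Rabs; lra.
Qed.
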